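(* Fix real numbers $\lambda>0$, $\mu>0$, $\Delta\ge 0$ and $T_{cl}>0$. Let $(N_k)_{k\ge1}$ be positive integers with $N_k\to\infty$, and let $m_k,c_k$ be positive integers with $m_kc_k=N_k$, $m_k\to\infty$ and $c_k\to\infty$. Define $$a_k=\lambda\Delta+\frac{\lambda}{m_k\mu},\qquad P_{b,k}=\frac{a_k^{c_k}/c_k!}{\sum_{j=0}^{c_k}a_k^{j}/j!},\qquad \mathbb{E}[T_{\text{sys},k}]=\Big(\Delta+\frac{1}{m_k\mu}\Big)(1-P_{b,k})+T_{cl}\,P_{b,k}.$$ Then $\lim_{k\to\infty}\mathbb{E}[T_{\text{sys},k}]=\Delta$.
   Context: Model: an edge system with $N$ workers is split into $c$ groups of $m$ workers ($N=mc$); jobs arrive as a Poisson process of rate $\lambda$, each job is replicated on the $m$ workers of a free group, and jobs finding all groups busy are blocked and sent to the cloud, where they take expected time $T_{cl}$. Worker service times are shifted exponential $\mathrm{SExp}(\Delta,\mu)$ ($\Delta$ plus an exponential of rate $\mu$), so the job-computing time has mean $\Delta+\frac{1}{m\mu}$. The blocking probability is the Erlang B formula with $c$ servers and offered load $\lambda(\Delta+\frac{1}{m\mu})$, and the average system time is $(1-P_b)\mathbb{E}[T_{\text{job}}]+P_b T_{cl}$. *)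

(* Defs.v *)
From Stdlib Require Import Arith Reals Lra Lia.
From Coquelicot Require Import Coquelicot.
Open Scope R_scope.

Definition erlangB (c : nat) (a : R) : R :=
  (a ^ c / INR (Factorial.fact c)) / sum_f_R0 (fun j => a ^ j / INR (Factorial.fact j)) c.

Definition offered_load (lambda mu Delta : R) (m : nat) : R :=
  lambda * Delta + lambda / (INR m * mu).

Definition avg_sys_time (lambda mu Delta Tcl : R) (m c : nat) : R :=
  let Pb := erlangB c (offered_load lambda mu Delta m) in
  (Delta + 1 / (INR m * mu)) * (1 - Pb) + Tcl * Pb.

(* Main.v *)
Require Import Defs.
From Stdlib Require Import Arith Reals Lra Lia.
From Coquelicot Require Import Coquelicot.
Open Scope R_scope.

Lemma sum_ge1 (a : R) : 0 <= a -> forall n,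
  1 <= sum_f_R0 (fun j => a ^ j / INR (Factorial.fact j)) n.
Proof.
  intros Ha n; induction n as [|n IH].
  - simpl. lra.
  - change (1 <= sum_f_R0 (fun j => a ^ j / INR (Factorial.fact j)) n
       + a ^ S n / INR (Factorial.fact (S n))).
    assert (0 <= a ^ S n / INR (Factorial.fact (S n))).
    { apply Rmult_le_pos. apply pow_le; lra.
      apply Rlt_le, Rinv_0_lt_compat, lt_0_INR, lt_O_fact. }
    lra.
Qed.

Lemma erlangB_bound (c : nat) (a A : R) : 0 <= a <= A ->
  0 <= erlangB c a <= A ^ c / INR (Factorial.fact c).
Proof.
  intros Ha. unfold erlangB.
  pose proof (sum_ge1 a (proj1 Ha) c) as Hs.
  assert (Hf : 0 < INR (Factorial.fact c)) by apply lt_0_INR, lt_O_fact.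
  assert (H0 : 0 <= a ^ c / INR (Factorial.fact c)).
  { apply Rmult_le_pos. apply pow_le; lra. apply Rlt_le, Rinv_0_lt_compat; lra. }
  assert (H1 : a ^ c / INR (Factorial.fact c) <= A ^ c / INR (Factorial.fact c)).
  { apply Rmult_le_compat_r. apply Rlt_le, Rinv_0_lt_compat; lra.
    apply pow_incr; lra. }
  split.
  - apply Rmult_le_pos; [lra|]. apply Rlt_le, Rinv_0_lt_compat; lra.
  - eapply Rle_trans; [|exact H1].
    unfold Rdiv at 1. rewrite <- (Rmult_1_r (a ^ c / INR (Factorial.fact c))) at 2.
    apply Rmult_le_compat_l; [lra|].
    rewrite <- Rinv_1. apply Rinv_le_contravar; lra.
Qed.

Theorem theorem3 (lambda mu Delta Tcl : R)
  (Hlambda : 0 < lambda) (Hmu : 0 < mu) (HDelta : 0 <= Delta) (HTcl : 0 < Tcl)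
  (N m c : nat -> nat)
  (HNpos : forall k, (0 < N k)%nat)
  (Hmpos : forall k, (0 < m k)%nat)
  (Hcpos : forall k, (0 < c k)%nat)
  (Hprod : forall k, (m k * c k)%nat = N k)
  (HNinf : is_lim_seq (fun k => INR (N k)) p_infty)
  (Hminf : is_lim_seq (fun k => INR (m k)) p_infty)
  (Hcinf : is_lim_seq (fun k => INR (c k)) p_infty) :
  is_lim_seq (fun k => avg_sys_time lambda mu Delta Tcl (m k) (c k)) Delta.
Proof.
  set (A := lambda * Delta + lambda / mu).
  set (Pb := fun k => erlangB (c k) (offered_load lambda mu Delta (m k))).
  set (d := fun k => 1 / (INR (m k) * mu)).
  assert (Hbd : forall k, 0 <= Pb k <= A ^ (c k) / INR (Factorial.fact (c k))).
  { intro k. apply erlangB_bound. unfold offered_load, A.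
    assert (Hm : 1 <= INR (m k)) by (apply (le_INR 1); specialize (Hmpos k); lia).
    assert (0 <= lambda * Delta) by (apply Rmult_le_pos; lra).
    assert (0 < lambda / (INR (m k) * mu)).
    { apply Rdiv_lt_0_compat; [lra|]. apply Rmult_lt_0_compat; lra. }
    assert (lambda / (INR (m k) * mu) <= lambda / mu).
    { unfold Rdiv. apply Rmult_le_compat_l; [lra|].
      apply Rinv_le_contravar; [lra|]. rewrite <- (Rmult_1_l mu) at 1.
      apply Rmult_le_compat_r; lra. }
    lra. }
  assert (Hfl : filterlim c eventually eventually).
  { intros P [M HM]. pose proof (proj2 (is_lim_seq_spec _ _) Hcinf (INR M)) as [K HK].
    exists K. intros n Hn. apply HM. specialize (HK n Hn).
    apply INR_lt in HK. lia. }
  assert (HPb : is_lim_seq Pb 0).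
  { apply (is_lim_seq_le_le (fun _ => 0) Pb
      (fun k => A ^ (c k) / INR (Factorial.fact (c k)))).
    - exact Hbd.
    - apply is_lim_seq_const.
    - apply (is_lim_seq_subseq (fun n => A ^ n / INR (Factorial.fact n)) 0 c Hfl).
      apply is_lim_seq_Reals, cv_speed_pow_fact. }
  assert (Hd : is_lim_seq d 0).
  { assert (H1 : is_lim_seq (fun k => INR (m k) * mu) p_infty).
    { eapply is_lim_seq_ext with (u := fun k => mu * INR (m k)).
      { intro; ring. }
      apply (is_lim_seq_scal_l _ mu p_infty) in Hminf.
      simpl in Hminf. unfold Rbar_mult, Rbar_mult' in Hminf.
      destruct (Rle_dec 0 mu) as [h|h]; [|lra].
      destruct (Rle_lt_or_eq_dec 0 mu h) as [h'|h']; [exact Hminf|lra]. }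
    apply is_lim_seq_inv in H1; [|discriminate].
    eapply is_lim_seq_ext; [|exact H1]. intro k; unfold d; simpl; field.
    split; [lra|]. apply not_0_INR. specialize (Hmpos k); lia. }
  eapply is_lim_seq_ext with
    (u := fun k => (Delta + d k) * (1 - Pb k) + Tcl * Pb k).
  { intro k; reflexivity. }
  replace (Finite Delta) with
    (Rbar_plus (Rbar_mult (Delta + 0) (1 - 0)) (Rbar_mult Tcl 0))
    by (simpl; f_equal; ring).
  apply is_lim_seq_plus'.
  - apply is_lim_seq_mult'.
    + apply is_lim_seq_plus'; [apply is_lim_seq_const|exact Hd].
    + apply is_lim_seq_minus'; [apply is_lim_seq_const|exact HPb].
  - apply is_lim_seq_mult'; [apply is_lim_seq_const|exact HPb].
Qed.
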